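(* Let $p_0<1$. For each $n$ let $(C_{n,i})_{i\ge1}$ be independent events with $P(C_{n,i})\le p_0$ for all $i$. Suppose there is a random variable $M^*$ with values in $\{0,1,2,\dots;\infty\}$ such that $\sum_i\mathbf 1_{C_{n,i}}\to M^*$ in distribution on $\{0,1,2,\dots;\infty\}$ (with its one-point compactification topology) as $n\to\infty$. Then either $P(M^*=0)>0$ or $P(M^*=\infty)=1$. *)

(* Defs.v *)
From HB Require Import structures.
From mathcomp Require Import all_boot all_order all_algebra.
From mathcomp Require Import all_classical all_reals all_analysis measurable_realfun.
Set Implicit Arguments. Unset Strict Implicit. Unset Printing Implicit Defensive.
Import Order.TTheory GRing.Theory Num.Theory.
Import numFieldNormedType.Exports.
Local Open Scope classical_set_scope.
Local Open Scope ring_scope.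

(* The space {0,1,2,...;oo}, viewed as a subspace of the extended reals.
   The subspace topology induced by \bar R is exactly the one-point
   compactification topology of the discrete space N. *)
Definition extnat (R : realType) : set (\bar R) :=
  [set x | x = +oo%E \/ exists k : nat, x = (k%:R)%:E].

Definition count_events (T : Type) (R : realType) (C : nat -> set T) (x : T)
  : \bar R := (\sum_(0 <= i <oo) ((\1_(C i) x : R)%:E))%E.

Definition mutually_independent (d : measure_display) (T : measurableType d)
  (R : realType) (P : probability T R) (C : nat -> set T) : Prop :=
  forall s : seq nat, uniq s ->
    P (\big[setI/setT]_(i <- s) C i) = (\prod_(i <- s) P (C i))%E.

Definition cvg_dist_extnat (R : realType)
  (d : nat -> measure_display) (T : forall n, measurableType (d n))
  (P : forall n, probability (T n) R) (X : forall n, T n -> \bar R)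
  (d0 : measure_display) (T0 : measurableType d0) (P0 : probability T0 R)
  (Y : T0 -> \bar R) : Prop :=
  forall f : \bar R -> R,
    {within @extnat R, continuous f} ->
    (exists B : R, forall x : \bar R, @extnat R x -> `|f x| <= B) ->
    (fun n => (\int[P n]_x (f (X n x))%:E)%E) @ \oo
      --> (\int[P0]_x (f (Y x))%:E)%E.

(* Main.v *)
Require Import Defs.
From HB Require Import structures.
From mathcomp Require Import all_boot all_order all_algebra.
From mathcomp Require Import all_classical all_reals all_analysis measurable_realfun.
From mathcomp Require Import ring lra.
Import Order.TTheory GRing.Theory Num.Theory.
Import numFieldNormedType.Exports.
Local Open Scope classical_set_scope.
Local Open Scope ring_scope.

Definition hlt {R : realType} (c : \bar R) (x : \bar R) : R := ((x < c)%E)%:R.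

Lemma hlt_cont (R : realType) (c x : \bar R) : x != c -> {for x, continuous (hlt c)}.
Proof.
move=> xc; apply: cvg_near_cst.
have [xlt|xge] := boolP (x < c)%E.
  have : nbhs x [set y | (y < c)%E].
    by apply: open_nbhs_nbhs; split => //; exact: open_ereal_lt_ereal.
  by apply: filterS => y /= yc; rewrite /hlt yc xlt.
have cx : (c < x)%E by rewrite lt_neqAle eq_sym xc /= leNgt.
have : nbhs x [set y | (c < y)%E].
  by apply: open_nbhs_nbhs; split => //; exact: open_ereal_gt_ereal.
apply: filterS => y /= yc; rewrite /hlt; rewrite (negbTE xge).
by rewrite ltNge (ltW yc).
Qed.

Section core.
Context (R : realType) d (T : measurableType d) (P : probability T R)
  (C : nat -> set T) (mC : forall i, measurable (C i))
  (indep : mutually_independent P C).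

Lemma PE A : measurable A -> P A = (fine (P A))%:E.
Proof. by move=> mA; rewrite fineK // fin_num_measure. Qed.

Definition q i := fine (P (C i)).

Lemma bigI_meas (s : seq nat) (F : nat -> set T) : (forall i, measurable (F i)) ->
  measurable (\big[setI/setT]_(i <- s) F i).
Proof. by move=> mF; elim: s => [|a s IH]; rewrite ?big_nil ?big_cons //; exact: measurableI. Qed.

Lemma indep_compl (s t : seq nat) : uniq (t ++ s) ->
  P ((\big[setI/setT]_(i <- t) C i) `&` \big[setI/setT]_(i <- s) ~` C i)
  = (fine (P (\big[setI/setT]_(i <- t) C i)) * \prod_(i <- s) (1 - q i))%:E.
Proof.
elim: s t => [|a s IH] t ut.
  by rewrite !big_nil setIT mulr1 -(PE _) //; exact: bigI_meas.
set A := \big[setI/setT]_(i <- t) C i.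
set B := \big[setI/setT]_(i <- s) ~` C i.
have mA : measurable A by exact: bigI_meas.
have mB : measurable B by apply: bigI_meas => i; exact: measurableC.
have -> : A `&` \big[setI/setT]_(i <- a :: s) ~` C i = (A `&` B) `\` C a.
  by rewrite big_cons; apply/seteqP; split => x /=; tauto.
rewrite measureD //; [|exact: measurableI|]; last first.
  by apply: (le_lt_trans (probability_le1 _ _)) => //; [exact: measurableI | exact: ltry].
have -> : (A `&` B) `&` C a = (\big[setI/setT]_(i <- a :: t) C i) `&` B.
  idtac.

  by rewrite big_cons; apply/seteqP; split => x /=; tauto.
have ut2 : uniq ((a :: t) ++ s).
  by move: ut; rewrite -cat1s uniq_catCA.
have ut' : uniq (t ++ s) by move: ut2 => /= /andP[].
have e1 : P (A `&` B) = (fine (P A) * \prod_(i <- s) (1 - q i))%:E := IH t ut'.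
have e2 : P ((\big[setI/setT]_(i <- a :: t) C i) `&` B) = (fine (P (\big[setI/setT]_(i <- a :: t) C i)) * \prod_(i <- s) (1 - q i))%:E := IH _ ut2.
transitivity (P (A `&` B) - P ((\big[setI/setT]_(i <- a :: t) C i) `&` B))%E; first by [].
have hA : P A = (\prod_(i <- t) P (C i))%E by apply: indep; move: ut; rewrite cat_uniq => /andP[].
have hA2 : P (\big[setI/setT]_(i <- a :: t) C i) = (P (C a) * P A)%E.
  rewrite indep ?big_cons ?hA //; move: ut2; rewrite cat_uniq => /andP[]//.
rewrite e1 e2 hA2 big_cons (PE _ (mC a)) (PE _ mA) /= -EFinB; congr EFin; rewrite /q; ring.
Qed.

Definition NZ m n := \big[setI/setT]_(m <= i < n) ~` C i.
Definition z m n := \prod_(m <= i < n) (1 - q i).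

Lemma PNZ m n : P (NZ m n) = (z m n)%:E.
Proof.
have := indep_compl (index_iota m n) [::]; rewrite big_nil setTI /= => ->.
  by rewrite probability_setT /= mul1r.
by rewrite /= /index_iota iota_uniq.
Qed.

Lemma NZ_meas m n : measurable (NZ m n).
Proof. by apply: bigI_meas => i; exact: measurableC. Qed.

Lemma bigI_mem (s : seq nat) (F : nat -> set T) x :
  (\big[setI/setT]_(i <- s) F i) x <-> (forall i, i \in s -> F i x).
Proof.
elim: s => [|a s IH]; first by rewrite big_nil.
rewrite big_cons; split.
  by move=> [Fa /IH H] i; rewrite in_cons => /orP[/eqP -> //|]; exact: H.
move=> H; split; first by apply: H; rewrite mem_head.
by apply/IH => i iS; apply: H; rewrite in_cons iS orbT.
Qed.

Definition cnt m n x := \sum_(m <= i < n) (\1_(C i) x : R).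

Lemma cnt_ge0 m n x : 0 <= cnt m n x.
Proof. by apply: sumr_ge0 => i _; rewrite indicE ler0n. Qed.

Lemma cnt_ge1 m n x : ~ NZ m n x -> 1 <= cnt m n x.
Proof.
move=> nz.
have [i [im Ci]] : exists i, i \in index_iota m n /\ C i x.
  apply: contra_notP nz => H; apply/bigI_mem => i im /= Ci.
  by apply: H; exists i.
rewrite /cnt (bigD1_seq i) //=; last exact: iota_uniq.
rewrite indicE mem_set // -[1]addr0 lerD //; first by rewrite addr0.
by apply: sumr_ge0 => j _; rewrite indicE ler0n.
Qed.

Lemma cnt_split m k n x : (m <= k <= n)%N -> cnt m n x = cnt m k x + cnt k n x.
Proof. by move=> /andP[mk kn]; rewrite /cnt (big_cat_nat mk kn). Qed.

Lemma cnt_meas m n : measurable_fun setT (cnt m n).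
Proof. by apply: measurable_sum => i; exact: measurable_indic. Qed.

Lemma meas_lt (f : T -> R) c : measurable_fun setT f -> measurable [set x | f x < c].
Proof.
move=> mf; have := mf measurableT _ (measurable_itv `]-oo, c[).
rewrite setTI; congr measurable; apply/seteqP; split => x /=; by rewrite in_itv.
Qed.


Context (p0 : R) (hp0 : p0 < 1) (p0ge : 0 <= p0)
  (hq : forall i, (P (C i) <= p0%:E)%E).

Lemma q_ge0 i : 0 <= q i.
Proof. by rewrite /q fine_ge0 //; exact: measure_ge0. Qed.

Lemma q_le i : q i <= p0.
Proof. by have := hq i; rewrite (PE _ (mC i)) lee_fin. Qed.

Lemma z_ge0 m n : 0 <= z m n.
Proof. by apply: prodr_ge0 => i _; have := q_le i; have := hp0; lra. Qed.

Lemma z_nil m n : (n <= m)%N -> z m n = 1.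
Proof. by move=> nm; rewrite /z big_geq. Qed.

Lemma z_recr m n : (m <= n)%N -> z m n.+1 = z m n * (1 - q n).
Proof. by move=> mn; rewrite /z big_nat_recr. Qed.

Lemma z_split m k n : (m <= k <= n)%N -> z m n = z m k * z k n.
Proof. by move=> /andP[mk kn]; rewrite /z (big_cat_nat mk kn). Qed.

Lemma cut (eta : R) m L : eta < 1 -> z m L <= eta ->
  exists N, [/\ (m < N <= L)%N, z m N <= eta & eta < z m N.-1].
Proof.
move=> eta1; elim: L => [|L IH] zL.
  by move: zL; rewrite z_nil //; lra.
have [zL'|zL'] := leP (z m L) eta.
  by have [N [/andP[mN NL] h1 h2]] := IH zL'; exists N; split => //; rewrite mN /= (leq_trans NL).
have [mL|Lm] := leqP m L.
  by exists L.+1; split; rewrite ?ltnS ?mL ?leqnn.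
by move: zL; rewrite z_nil //; lra.
Qed.


Definition E k m L := [set x | cnt m L x < k.+1%:R].

Lemma E_meas k m L : measurable (E k m L).
Proof. exact/meas_lt/cnt_meas. Qed.

Lemma core (eta : R) : 0 < eta < 1 -> forall k m L,
  z m L <= (eta * (1 - p0)) ^+ k.+1 -> (P (E k m L) <= (k.+1%:R * eta)%:E)%E.
Proof.
move=> /andP[eta0 eta1]; set a := eta * (1 - p0).
have a0 : 0 < a by rewrite /a; apply: mulr_gt0 => //; rewrite subr_gt0.
have aeta : a <= eta by rewrite /a; have := p0ge; nra.
have a1 : a <= 1 by lra.
elim=> [|k IH] m L zL.
  rewrite mul1r; apply: (le_trans (y := P (NZ m L))).
    apply: le_measure; rewrite ?inE; [exact: E_meas|exact: NZ_meas|].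
    move=> x /= Ex; case: (pselect (NZ m L x)) => // nz.
    by have := cnt_ge1 _ _ _ nz; move: Ex; rewrite /E /=; lra.
  by rewrite PNZ lee_fin; move: zL; rewrite expr1; lra.
have zLa : z m L <= eta.
  apply: (le_trans zL); rewrite exprS; apply: (le_trans _ aeta).
  have := exprn_ile1 k.+1 (ltW a0) a1; have := ltW a0; nra.
have [N [/andP[mN NL] zN zN1]] := cut eta m L eta1 zLa.
have eN : N = N.-1.+1 by rewrite prednK // (leq_ltn_trans _ mN).
have zNa : a < z m N.
  rewrite eN z_recr; last by rewrite -ltnS -eN.
  have := q_le N.-1; have := hp0; rewrite /a; nra.
have zNL : z N L <= a ^+ k.+1.
  rewrite (z_split m N L) in zL; last by rewrite (ltnW mN).
  move: zL; rewrite exprS.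
  have := z_ge0 N L; have := exprn_ge0 k.+1 (ltW a0); nra.
have IHN := IH N L zNL.
apply: (le_trans (y := P (NZ m N `|` E k N L))).
  apply: le_measure; rewrite ?inE; [exact: E_meas| apply: measurableU; [exact: NZ_meas|exact: E_meas]|].
  move=> x /= Ex; case: (pselect (NZ m N x)) => [h|h]; [by left|right].
  rewrite /E /= ltNge; apply/negP => hge.
  have h1 := cnt_ge1 _ _ _ h.
  move: Ex; rewrite /E /= (cnt_split m N L); last by rewrite (ltnW mN).
  rewrite -natr1; lra.
apply: (le_trans (y := (P (NZ m N) + P (E k N L))%E)).
  exact: (measureU2 _ (NZ_meas m N) (E_meas k N L)).
rewrite PNZ; apply: (le_trans (leeD (lexx _) IHN)).
rewrite -EFinD lee_fin -natr1 mulrDl mul1r; lra.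
Qed.


Definition S x := count_events R C x.

Lemma S_meas : measurable_fun setT S.
Proof.
apply: (ge0_emeasurable_sum (P := xpredT)) => [k x _ _|k _].
  by rewrite lee_fin indicE ler0n.
by apply/measurable_EFinP; exact: measurable_indic.
Qed.

Lemma partial_le x L : ((cnt 0 L x)%:E <= S x)%E.
Proof.
rewrite /cnt -sumEFin; apply: nneseries_lim_ge => n _ _.
by rewrite lee_fin indicE ler0n.
Qed.

Lemma S_zero x : (forall i, ~ C i x) -> S x = 0%E.
Proof.
by move=> h; apply: eseries0 => i _ _; rewrite indicE memNset.
Qed.

Lemma meas_elt (f : T -> \bar R) (c : \bar R) : measurable_fun setT f ->
  measurable [set x | (f x < c)%E].
Proof.
move=> mf; have := mf measurableT _ (emeasurable_itv `]-oo, c[).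
rewrite setTI; congr measurable; apply/seteqP; split => x /=; by rewrite in_itv.
Qed.


Lemma ev_lt (u : nat -> \bar R) (l b : \bar R) : u @ \oo --> l -> (l < b)%E ->
  \forall n \near \oo, (u n < b)%E.
Proof.
move=> hu lb; apply: (hu [set y | (y < b)%E]); apply: open_nbhs_nbhs; split => //.
exact: open_ereal_lt_ereal.
Qed.

Lemma tail (delta : R) : (P [set x | S x < (2^-1)%:E] < delta%:E)%E ->
  exists L, z 0 L < delta.
Proof.
move=> hd.
have noninc : nonincreasing_seq (fun L => NZ 0 L).
  move=> n m nm; rewrite subsetEset => x /bigI_mem h; apply/bigI_mem => i.
  rewrite !mem_index_iota => /andP[_ im]; apply: h.
  by rewrite mem_index_iota /= (leq_trans im nm).
have F0 : (P (NZ 0 0) < +oo)%E by rewrite PNZ ltry.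
have hc := nonincreasing_cvg_mu F0 (fun L => NZ_meas 0 L) (bigcapT_measurable (fun L => NZ_meas 0 L)) noninc.
have capS : (P (\bigcap_n NZ 0 n) <= P [set x | S x < (2^-1)%:E])%E.
  apply: le_measure; rewrite ?inE; [exact: bigcapT_measurable (fun L => NZ_meas 0 L)|exact/meas_elt/S_meas|].
  move=> x hx /=; rewrite S_zero; first by rewrite lte_fin invr_gt0.
  move=> i Ci; have /bigI_mem := hx i.+1 I; move=> /(_ i); rewrite mem_index_iota leq0n ltnS leqnn.
  by move=> /(_ isT).
have := ev_lt _ _ _ hc (le_lt_trans capS hd).
move=> [N _ hN]; exists N; have := hN N (leqnn N); rewrite /= PNZ lte_fin //.
Qed.



Lemma finite_bound (eta : R) k : 0 < eta < 1 ->
  (P [set x | S x < (2^-1)%:E] < ((eta * (1 - p0)) ^+ k.+1)%:E)%E ->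
  (P [set x | S x < (k%:R + 2^-1)%:E] <= (k.+1%:R * eta)%:E)%E.
Proof.
move=> heta h0; have [L zL] := tail _ h0.
apply: le_trans (core _ heta k 0 L (ltW zL)).
apply: le_measure; rewrite ?inE; [exact/meas_elt/S_meas|exact: E_meas|].
move=> x /= Sx; have := le_lt_trans (partial_le x L) Sx; rewrite lte_fin /E /= => h.
rewrite -[k.+1]addn1 natrD.
have : (2^-1 : R) < 1 by rewrite invf_lt1 // ltr1n.
lra.
Qed.

End core.


Lemma int_hlt (R : realType) d (T : measurableType d) (Q : probability T R)
  (X : T -> \bar R) (c : \bar R) : measurable_fun setT X ->
  (\int[Q]_x (hlt c (X x))%:E = Q [set x | X x < c])%E.
Proof.
move=> mX.
rewrite (_ : (fun x => (hlt c (X x))%:E) = (fun x => (\1_[set x | (X x < c)%E] x)%:E)); last first.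
  apply/funext => x; rewrite indicE /hlt; case: (boolP (X x < c)%E) => h.
    by rewrite mem_set.
  by rewrite memNset //; apply/negP.
by rewrite integral_indic ?setIT //; exact: meas_elt.
Qed.

Lemma nonint (R : realType) (k j : nat) : (j%:R : R) != k%:R + 2^-1.
Proof.
have h2 : (0:R) < 2^-1 by rewrite invr_gt0 ltr0n.
have h3 : (2^-1 : R) < 1 by rewrite invf_lt1 // ltr1n.
apply/negP => /eqP e; case: (leqP j k) => jk.
  by move: jk; rewrite -(ler_nat R); lra.
by move: jk; rewrite -(ler_nat R) -natr1; lra.
Qed.

Lemma hlt_within (R : realType) (c : R) : (forall j : nat, (j%:R : R) != c) ->
  {within @extnat R, continuous (hlt c%:E)}.
Proof.
move=> hc; apply: continuous_in_subspaceT => x; rewrite in_setE => -[->|[j ->]].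
  by apply: hlt_cont.
by apply: hlt_cont; rewrite eqe hc.
Qed.

Theorem lemma50 (R : realType) (p0 : R) (hp0 : p0 < 1)
  (d : nat -> measure_display) (T : forall n, measurableType (d n))
  (P : forall n, probability (T n) R)
  (C : forall n, nat -> set (T n))
  (hCmeas : forall n i, measurable (C n i))
  (hCindep : forall n, mutually_independent (P n) (C n))
  (hCp : forall n i, (P n (C n i) <= p0%:E)%E)
  (d0 : measure_display) (T0 : measurableType d0) (P0 : probability T0 R)
  (M : T0 -> \bar R)
  (hMmeas : measurable_fun setT M)
  (hMval : forall x, @extnat R (M x))
  (hcvg : cvg_dist_extnat P (fun n => @count_events (T n) R (C n)) P0 M) :
  (0 < P0 [set x | M x = 0%E])%E \/ P0 [set x | M x = +oo%E] = 1%E.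
Proof.
have p0ge : 0 <= p0.
  have := le_trans (measure_ge0 (P 0%N) (C 0%N 0%N)) (hCp 0%N 0%N).
  by rewrite lee_fin.
have lim_c : forall c : R, (forall j : nat, (j%:R : R) != c) ->
   (fun n => P n [set x | (count_events R (C n) x < c%:E)%E]) @ \oo
     --> P0 [set x | (M x < c%:E)%E].
  move=> c hc.
  have hb : exists B : R, forall x : \bar R, @extnat R x -> `|hlt c%:E x| <= B.
    by exists 1 => x _; rewrite /hlt; case: (_ < _)%E; rewrite ?normr0 ?normr1.
  have := hcvg (hlt c%:E) (hlt_within _ _ hc) hb.
  have e : (fun n => (\int[P n]_x (hlt c%:E (count_events R (C n) x))%:E)%E) =
           (fun n => P n [set x | (count_events R (C n) x < c%:E)%E]).
    apply/funext => n; apply: int_hlt; exact: (S_meas _ _ _ _ (hCmeas n)).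
  by rewrite /= e int_hlt.
have h12 : (0:R) < 2^-1 by rewrite invr_gt0 ltr0n.
have h13 : (2^-1 : R) < 1 by rewrite invf_lt1 // ltr1n.
case: (boolP (0 < P0 [set x | M x = 0%E])%E) => [h|h]; [by left|right].
have M0 : P0 [set x | (M x < (2^-1)%:E)%E] = 0%E.
  have -> : [set x | (M x < (2^-1)%:E)%E] = [set x | M x = 0%E].
    apply/seteqP; split => x /=.
      case: (hMval x) => [->|[j ->]]; first by rewrite ltNge leey.
      rewrite lte_fin; case: j => [|j].
        by rewrite mulr0n.
      move=> hj; exfalso; have : (1:R) <= j.+1%:R by rewrite ler1n.
      lra.
    by move=> ->; rewrite lte_fin.
  by apply/eqP; rewrite eq_le measure_ge0 andbT leNgt.
have Mk : forall k : nat, P0 [set x | (M x < (k%:R + 2^-1)%:E)%E] = 0%E.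
  move=> k; set v := P0 _.
  have bound : forall eta, 0 < eta < 1 -> (v <= (k.+1%:R * eta)%:E)%E.
    move=> eta heta; set a := (eta * (1 - p0)) ^+ k.+1.
    have a0 : 0 < a.
      rewrite /a exprn_gt0 // mulr_gt0 // ?subr_gt0 //.
      by case/andP: heta.
    have l0 := lim_c (2^-1) (fun j => (ltac:(by have := nonint R 0 j; rewrite add0r))).
    have lk := lim_c _ (nonint R k).
    have ha : (P0 [set x | (M x < (2^-1)%:E)%E] < a%:E)%E by rewrite M0 lte_fin.
    have ev0 := ev_lt _ _ _ _ l0 ha.
    apply: (cvge_le _ lk).
    apply: filterS ev0 => n hn.
    exact: (finite_bound _ _ _ _ _ (hCmeas n) (hCindep n) p0 hp0 p0ge (hCp n) eta k heta hn).
  have mv : measurable [set x | (M x < (k%:R + 2^-1)%:E)%E] by exact: meas_elt.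
  have fv : v \is a fin_num by rewrite /v fin_num_measure.
  have v1 : (v <= 1)%E by exact: probability_le1.
  apply/eqP; rewrite eq_le measure_ge0 andbT.
  move: v1 bound; rewrite -(fineK fv); set y := fine v => v1 bound.
  rewrite lee_fin leNgt; apply/negP => ypos; move: v1; rewrite lee_fin => v1.
  have K0 : (0:R) < k.+1%:R by rewrite ltr0n.
  have heta : 0 < y / (2 * k.+1%:R) < 1.
    apply/andP; split; first by rewrite divr_gt0 // mulr_gt0.
    rewrite ltr_pdivrMr ?mulr_gt0 // mul1r.
    have : (1:R) <= k.+1%:R by rewrite ler1n.
    lra.
  have := bound _ heta; rewrite lee_fin.
  have -> : k.+1%:R * (y / (2 * k.+1%:R)) = y / 2 by field; rewrite gt_eqF.
  lra.
set U := \bigcup_k [set x | (M x < (k%:R + 2^-1)%:E)%E].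
have mU : measurable U by apply: bigcupT_measurable => k; exact: meas_elt.
have U0 : P0 U = 0%E.
  apply/eqP; rewrite eq_le measure_ge0 andbT.
  have := measure_sigma_subadditive P0 (A := U)
    (F := fun k => [set x | (M x < (k%:R + 2^-1)%:E)%E]) (fun k => meas_elt _ _ _ _ _ hMmeas) mU.
  move=> /(_ (@subset_refl _ U)) /le_trans; apply; rewrite eseries0 // => i _ _; exact: Mk.
have -> : [set x | M x = +oo%E] = ~` U.
  apply/seteqP; split => x /=.
    by move=> Mx [k _ /=]; rewrite Mx ltNge leey.
  move=> nU; case: (hMval x) => [//|[j Mj]]; exfalso; apply: nU; exists j => //=.
  by rewrite Mj lte_fin ltrDl.
by rewrite probability_setC // U0 sube0.
Qed.
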